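(* Let $X$ be a connected open Riemann surface, $X^* = X\cup\{\infty\}$ its one-point compactification, and let $E \subseteq X$ be a closed subset. Then $E$ has the bounded exhaustion hull (BEH) property if and only if $X^* \setminus E$ is locally connected at $\infty$.
   Context: For a closed set $A\subseteq X$, a hole of $A$ is a relatively compact connected component of $X\setminus A$, and $h(A)$ denotes the union of all holes of $A$. A closed set $E\subseteq X$ has the BEH property if for every compact set $K\subseteq X$ the set $h(E\cup K)$ is relatively compact in $X$. *)

(* Defs.v *)
From HB Require Import structures.
From mathcomp Require Import all_boot all_order all_algebra.
From mathcomp Require Import all_classical all_reals all_analysis.
From mathcomp Require Import complex.
Set Implicit Arguments. Unset Strict Implicit. Unset Printing Implicit Defensive.
Import Order.TTheory GRing.Theory Num.Theory.
Import numFieldNormedType.Exports.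
Local Open Scope classical_set_scope.
Local Open Scope ring_scope.

(* The complex plane over a real field R: R[i] viewed as a normed module
   over itself (so that [derivable f z 1] is complex differentiability). *)
Definition cplx (R : realType) := (R[i])^o.

Definition is_chart (R : realType) (X : topologicalType)
  (U : set X) (phi : X -> cplx R) (psi : cplx R -> X) : Prop :=
  [/\ open U, open (phi @` U),
      (forall x, U x -> psi (phi x) = x),
      {within U, continuous phi} &
      {within phi @` U, continuous psi}].

Definition holomorphic_atlas (R : realType) (X : topologicalType)
  (A : set (set X * (X -> cplx R) * (cplx R -> X))) : Prop :=
  [/\ (forall c, A c -> is_chart c.1.1 c.1.2 c.2),
      (forall x : X, exists2 c, A c & c.1.1 x) &
      (forall c d, A c -> A d ->
         forall z, (c.1.2 @` (c.1.1 `&` d.1.1)) z ->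
           derivable (d.1.2 \o c.2) z 1)].

Definition riemann_surface (R : realType) (X : topologicalType) : Prop :=
  [/\ hausdorff_space X, connected [set: X] &
      exists A : set (set X * (X -> cplx R) * (cplx R -> X)),
        holomorphic_atlas A].

Definition rel_compact (X : topologicalType) (S : set X) : Prop :=
  compact (closure S).

Definition is_hole (X : topologicalType) (A : set X) (H : set X) : Prop :=
  exists2 x, (~` A) x &
    H = connected_component (~` A) x /\ rel_compact H.

Definition holes (X : topologicalType) (A : set X) : set X :=
  \bigcup_(H in is_hole A) H.

Definition BEH (X : topologicalType) (E : set X) : Prop :=
  forall K : set X, compact K -> rel_compact (holes (E `|` K)).

Definition locally_connected_at (T : topologicalType) (Y : set T) (p : T)
  : Prop :=
  forall W : set T, open W -> W p ->
    exists V : set T, [/\ V p, V `<=` W `&` Y, connected V &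
                          exists2 O : set T, open O & V = O `&` Y].

(* Main.v *)
Require Import Defs.
From HB Require Import structures.
From mathcomp Require Import all_boot all_order all_algebra.
From mathcomp Require Import all_classical all_reals all_analysis.
From mathcomp Require Import complex.
Import numFieldNormedType.Exports.
Local Open Scope classical_set_scope.

Import Order.TTheory GRing.Theory Num.Theory.

Section AuxC.
Local Open Scope ring_scope.
Local Open Scope complex_scope.


Lemma rc_cont (R : realType) : continuous (fun t : R => (t%:C : cplx R)).
Proof.
move=> t; apply/cvgrPdist_lt => e e0.
move: e0; rewrite ltcE => /andP[/eqP He Re0].
have := (@cvg_id _ (nbhs t)).
move/cvgrPdist_lt => /(_ _ Re0).
apply: filterS => s hs.
have -> : e = (complex.Re e)%:C by case: e He Re0 hs => a b /= -> .
rewrite -rmorphB normc_def /= expr0n /= addr0 sqrtr_sqr ltcR.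
exact: hs.
Qed.

Lemma rc_norm (R : realType) (t : R) : `|t%:C| = `|t|%:C :> R[i].
Proof. by rewrite normc_def /= expr0n /= addr0 sqrtr_sqr. Qed.

Lemma ball_conn (R : realType) (z : cplx R) (r : R[i]) : connected (ball z r).
Proof.
set f := fun y (t:R) => z + (t%:C : cplx R) * (y - z).
have -> : ball z r = \bigcup_(y in ball z r) (f y @` `[0,1]).
  rewrite eqEsubset; split => [y yb|w [y yb [t t01 <-]]].
    exists y => //; exists 1; first by rewrite /= in_itv /= lexx ler01.
    by rewrite /f mul1r addrC subrK.
  move: yb t01; rewrite -!ball_normE /ball_ /= /f in_itv /= => yb /andP[t0 t1].
  rewrite opprD addrA subrr add0r normrN normrM rc_norm.
  apply: le_lt_trans yb; rewrite distrC.
  rewrite ler_piMl //; first by rewrite lecR ger0_norm.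
apply: bigcup_connected.
  exists z => y _; exists 0; first by rewrite /= in_itv /= lexx ler01.
  by rewrite /f mul0r addr0.
move=> y _; apply: connected_continuous_connected; first exact: segment_connected.
apply: continuous_subspaceT => t.
apply: cvgD; first exact: cvg_cst.
apply: cvgMl; exact: rc_cont.
Qed.

Lemma X_lc (R : realType) (X : topologicalType) (hX : riemann_surface R X)
  (x : X) (W : set X) : open W -> W x ->
  exists V : set X, [/\ open V, V x, V `<=` W & connected V].
Proof.
move=> oW Wx.
case: hX => _ _ [A [hc hcov _]].
case: (hcov x) => c Ac Ux.
case: (hc c Ac) => oU oP psiphi cphi cpsi.
move: Ux oU oP psiphi cphi cpsi.
case: c {Ac} => [[U phi] psi] /= Ux oU oP psiphi cphi cpsi.
have cpsi' := cpsi; rewrite continuous_open_subspace // in cpsi'.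
have cphi' := cphi; rewrite continuous_open_subspace // in cphi'.
have oS : open (phi @` U `&` psi @^-1` (U `&` W)).
  by apply: (proj1 (continuous_inP _ oP) cpsi'); exact: openI.
have Sx : (phi @` U `&` psi @^-1` (U `&` W)) (phi x).
  by split; [exists x | rewrite /preimage /= psiphi].
have /nbhs_ballP [r r0 rS] : nbhs (phi x) (phi @` U `&` psi @^-1` (U `&` W)).
  by move: oS; rewrite openE => /(_ _ Sx).
exists (U `&` phi @^-1` ball (phi x) r); split.
- by apply: (proj1 (continuous_inP _ oU) cphi'); exact: ball_open.
- by split => //; rewrite /preimage /=; exact: ballxx.
- by move=> v [Uv /rS [_]]; rewrite /preimage /= psiphi // => -[].
have -> : U `&` phi @^-1` ball (phi x) r = psi @` ball (phi x) r.
  rewrite eqEsubset; split => [v [Uv Bv]|_ [z Bz <-]].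
    by exists (phi v) => //; rewrite psiphi.
  have [[u Uu uz] _] := rS _ Bz.
  by rewrite -uz psiphi //; split => //; rewrite /preimage /= uz.
apply: connected_continuous_connected; first exact: ball_conn.
apply: continuous_subspaceW cpsi.
by move=> z /rS [].
Qed.

End AuxC.

Definition lcX (X : topologicalType) := forall (x : X) (W : set X), open W -> W x ->
  exists V : set X, [/\ open V, V x, V `<=` W & connected V].

Lemma comp_open (X : topologicalType) (lc : lcX X) (A : set X) x :
  open A -> open (connected_component A x).
Proof.
move=> oA; rewrite openE => z Cz.
have Az := connected_component_sub Cz.
have [V [oV Vz VA cV]] := lc z A oA Az.
rewrite /interior /= (same_connected_component Cz).
apply: (@filterS _ _ _ V); first exact: connected_component_max.
exact: open_nbhs_nbhs.
Qed.

Lemma comp_closure (X : topologicalType) (lc : lcX X) (G : set X) w y :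
  open G -> G y -> closure (connected_component G w) y ->
  connected_component G w y.
Proof.
move=> oG Gy cl.
have [z [Cwz Cyz]] : connected_component G w `&` connected_component G y !=set0.
  apply: cl; apply: open_nbhs_nbhs; split; first exact: comp_open.
  exact: connected_component_refl.
rewrite (same_connected_component Cwz) -(same_connected_component Cyz).
exact: connected_component_refl.
Qed.

Lemma conn_add (T : topologicalType) (A : set T) p :
  connected A -> closure A p -> connected (A `|` [set p]).
Proof.
move=> cA clA S S0 [Op oO SO] [Dc cD SD].
have [[a [Aa Oa]]|AO0] := pselect (A `&` Op !=set0).
  have AOD : A `&` Op = A `&` Dc.
    apply/seteqP; split => y [Ay h].
      have : S y by rewrite SO; split => //; left.
      by rewrite SD => -[].
    have : S y by rewrite SD; split => //; left.
    by rewrite SO => -[].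
  have eA := cA (A `&` Op) (ex_intro _ a (conj Aa Oa)) (ex_intro2 _ _ Op oO erefl)
    (ex_intro2 _ _ Dc cD AOD).
  have AD : A `<=` Dc by move=> y Ay; rewrite -eA AOD in Ay; case: Ay.
  have Dp : Dc p by rewrite ((closure_id Dc).1 cD); exact: (closureS AD).
  apply/seteqP; split; first by rewrite SD => y [].
  move=> y [Ay|->].
    rewrite SD; split; [left|exact: AD] => //.
  by rewrite SD; split => //; right.
exfalso; apply: AO0.
case: S0 => q Sq.
have := Sq; rewrite SO => -[[Aq|qp] Oq]; first by exists q.
rewrite qp in Oq.
have [y [Ay Oy]] := clA Op (open_nbhs_nbhs (conj oO Oq)).
by exists y.
Qed.

Section opc.
Variable X : topologicalType.
Local Notation opc := (one_point_compactification X).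

Lemma opc_nbhsN (O : set opc) : open O -> O None ->
  exists K : set X, [/\ compact K, closed K & forall x, ~ K x -> O (Some x)].
Proof.
rewrite openE => oO ON.
have := oO _ ON; rewrite /interior /=.
case=> K [cK clK] sub; exists K; split => // x nKx.
by apply: sub; left; exists x.
Qed.

Lemma opc_open (O : set opc) :
  (O None -> exists K : set X, [/\ compact K, closed K & forall x, ~ K x -> O (Some x)]) ->
  (forall x, O (Some x) -> nbhs x (Some @^-1` O)) -> open O.
Proof.
move=> hN hS; rewrite openE => -[x|] Ox; rewrite /interior /=.
  exact: hS.
have [K [cK clK sub]] := hN Ox.
exists K => //; move=> _ [[y Ky <-]|->] //.
exact: sub.
Qed.

End opc.
Arguments opc_nbhsN {X O}.
Arguments opc_open {X O}.

Lemma SomeN (X : Type) (x : X) : ~ ([set None] : set (option X)) (Some x).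
Proof. by move=> h; discriminate h. Qed.
Arguments SomeN {X x}.

Lemma dirB (X : topologicalType) (hH : hausdorff_space X) (lc : lcX X)
  (E : set X) (hE : closed E) :
  locally_connected_at (T := one_point_compactification X)
    (~` (Some @` E)) None -> BEH E.
Proof.
move=> hlc K cK.
have clK := compact_closed hH cK.
pose W : set (one_point_compactification X) := Some @` (~` K) `|` [set None].
have oW : open W.
  apply: opc_open.
    by move=> _; exists K; split => // x nKx; left; exists x.
  move=> x [[y nKy [yx]]|hx]; last by case: (SomeN hx).
  apply: (@filterS _ _ _ (~` K)); first by move=> z nKz; left; exists z.
  apply: open_nbhs_nbhs; split; first exact: closed_openC.
  by rewrite -yx.
have [V [VN VWY cV [Op oO VOY]]] := hlc W oW (or_intror erefl).
have ON : Op None by move: VN; rewrite VOY => -[].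
have [K2 [cK2 clK2 OK2]] := opc_nbhsN oO ON.
suff sub : holes (E `|` K) `<=` K2.
  have hc := @subclosed_compact _ (closure (holes (E `|` K))) K2 (@closed_closure _ (holes (E `|` K))) cK2; apply: hc.
  move=> y /(closureS sub); by rewrite -((closure_id K2).1 clK2).
move=> h [C [w Gw [CE rcC]] Ch].
apply: contrapT => nK2h.
pose G := ~` (E `|` K).
have oG : open G := closed_openC (closedU hE clK).
have Gh : G h by rewrite CE in Ch; exact: connected_component_sub Ch.
have Vh : V (Some h).
  rewrite VOY; split; first exact: OK2.
  by move=> [y Ey [yh]]; apply: Gh; left; rewrite -yh.
have CEo : open C by rewrite CE; exact: comp_open.
have eqV : V `&` Some @` C = V.
apply: cV.
- by exists (Some h); split => //; exists h.
- by exists (Some @` C) => //; exact: one_point_compactification_open_some.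
- exists (~` (Some @` (~` closure C) `|` [set None])).
    apply: open_closedC; apply: opc_open.
      move=> _; exists (closure C); split => //; first exact: closed_closure.
      by move=> x nx; left; exists x.
    move=> x [[y nKy [yx]]|hx]; last by case: (SomeN hx).
    apply: (@filterS _ _ _ (~` closure C)); first by move=> z nKz; left; exists z.
    apply: open_nbhs_nbhs; split; first exact: (closed_openC (@closed_closure _ C)).
    by rewrite -yx.
  apply/seteqP; split.
    move=> p [Vp [y Cy yp]]; split => //; rewrite -yp.
    move=> [[z nclz [zy]]|hx]; last by case: (SomeN hx).
    by apply: nclz; rewrite zy; exact: subset_closure.
  move=> [y|] [Vp np]; last by exfalso; apply: np; right.
  split => //; exists y => //.
  have [Wy Yy] : (W `&` ~` (Some @` E)) (Some y) by exact: VWY.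
  have Gy : G y.
    move=> [Ey|Ky]; first by apply: Yy; exists y.
    case: Wy => [[z nKz [zy]]|hx]; last by case: (SomeN hx).
    by apply: nKz; rewrite zy.
  rewrite CE; apply: comp_closure => //; rewrite -CE.
  apply: contrapT => ncl; apply: np; left; exists y => //.
have : (V `&` Some @` C) None by rewrite eqV.
by case=> _ [y _ []].
Qed.

Lemma dirA (X : topologicalType) (lc : lcX X)
  (E : set X) (hE : closed E) : BEH E ->
  locally_connected_at (T := one_point_compactification X)
    (~` (Some @` E)) None.
Proof.
move=> hB W oW WN.
have [K [cK clK WK]] := opc_nbhsN oW WN.
pose H := holes (E `|` K).
have rcH : compact (closure H) := hB K cK.
pose K2 := K `|` closure H.
pose G := ~` (E `|` K).
have oG : open G := closed_openC (closedU hE clK).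
pose V : set (one_point_compactification X) := [set None] `|` Some @` (~` (E `|` K2)).
have fact1 : forall x, G x -> ~ closure H x -> ~ rel_compact (connected_component G x).
  move=> x Gx nHx rcx; apply: nHx; apply: subset_closure.
  exists (connected_component G x); last exact: connected_component_refl.
  by exists x.
have fact2 : forall x y, G x -> ~ closure H x -> connected_component G x y -> ~ closure H y.
  move=> x y Gx nHx Cxy clHy.
  have [h [[C [w Gw [CE rcC]] Ch] Cxh]] : H `&` connected_component G x !=set0.
    apply: clHy; apply: open_nbhs_nbhs; split => //; exact: comp_open.
  apply: nHx; apply: subset_closure; exists C; first by exists w => //; split.
  rewrite CE in Ch *.
  rewrite (same_connected_component Ch) -(same_connected_component Cxh).
  exact: connected_component_refl.
have fact3 : forall x, G x -> ~ closure H x ->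
    @closure (one_point_compactification X) (Some @` connected_component G x) None.
  move=> x Gx nHx B nB.
  have [K' [cK' clK'] sub] := nB.
  apply: contrapT => nI; apply: (fact1 x Gx nHx).
  have CK' : connected_component G x `<=` K'.
    move=> y Cy; apply: contrapT => nK'y; apply: nI.
    exists (Some y); split; first by exists y.
    by apply: sub; left; exists y.
  have hc := @subclosed_compact _ (closure (connected_component G x)) K'
     (@closed_closure _ _) cK'; apply: hc.
  move=> y /(closureS CK'); by rewrite -((closure_id K').1 clK').
exists V; split.
- by left.
- move=> p [->|[y ny <-]]; split.
  + exact: WN.
  + by move=> [y _ hy]; discriminate hy.
  + by apply: WK => Ky; apply: ny; right; left.
  + by move=> [z Ez [zy]]; apply: ny; left; rewrite -zy.
- pose Aset (o : option X) : set (one_point_compactification X) :=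
    if o is Some x then Some @` connected_component G x `|` [set None] else [set None].
  pose P (o : option X) : Prop := if o is Some x then G x /\ ~ closure H x else True.
  have -> : V = \bigcup_(o in P) Aset o.
    apply/seteqP; split.
      move=> p [->|[y ny <-]]; first by exists None.
      have Gy : G y by move=> [Ey|Ky]; apply: ny; [left|right; left].
      exists (Some y); first by split => // clHy; apply: ny; right; right.
      by left; exists y => //; exact: connected_component_refl.
    move=> p [[x|] /= Px]; last by move=> ->; left.
    case: Px => Gx nHx [[y Cy <-]|->]; last by left.
    right; exists y => //.
    have Gy : G y := connected_component_sub Cy.
    have nHy := fact2 x y Gx nHx Cy.
    move=> [Ey|[Ky|clHy]]; [by apply: Gy; left|by apply: Gy; right|by []].
  apply: bigcup_connected.
    by exists None => -[x|] _ /=; [right|].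
  move=> [x [Gx nHx]|_] /=; last exact: connected1.
  apply: conn_add; last exact: fact3.
  apply: connected_continuous_connected; first exact: component_connected.
  apply: continuous_subspaceT; exact: one_point_compactification_some_continuous.
- exists ([set None] `|` Some @` (~` K2)).
    apply: opc_open.
      move=> _; exists K2; split.
      + exact: compactU.
      + exact: (closedU clK (@closed_closure _ H)).
      + by move=> x nx; right; exists x.
    move=> x [hx|[y nKy [yx]]]; first by discriminate hx.
    apply: (@filterS _ _ _ (~` K2)); first by move=> z nKz; right; exists z.
    apply: open_nbhs_nbhs; split; last by rewrite -yx.
    exact: closed_openC (closedU clK (@closed_closure _ _)).
  apply/seteqP; split.
    move=> p [->|[y ny <-]].
      by split; [left | move=> [y _ hy]; discriminate hy].
    split; first by right; exists y => // hy; apply: ny; right.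
    by move=> [z Ez [zy]]; apply: ny; left; rewrite -zy.
  move=> p [[->|[y nK2y <-]] nY]; first by left.
  right; exists y => //; move=> [Ey|K2y]; last exact: nK2y.
  by apply: nY; exists y.
Qed.

Theorem proposition3p1 (R : realType) (X : topologicalType)
  (hX : riemann_surface R X) (hopen : ~ compact [set: X])
  (E : set X) (hE : closed E) :
  BEH E <->
  locally_connected_at (T := one_point_compactification X)
    (~` (Some @` E)) None.
Proof.
have lc : lcX X by move=> x W oW Wx; exact: X_lc hX x W oW Wx.
have hH : hausdorff_space X by case: hX.
split; [exact: dirA | exact: dirB].
Qed.
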